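(* Consider the sensor-network Kalman filtering model of the context, with the network state process $\{\Xi(k)\}$ a time-homogeneous Markov chain with transition probabilities $p_{ij}$. Let $V_k=\operatorname{tr}P(k\mid k-1)$ and $Z(k)=(P(k\mid k-1),\Xi(k-1))$. Then $V_k\in\mathbb{R}_{\ge0}$ for all $k\in\mathbb{N}_0$, and there exists $W\in\mathbb{R}_{\ge0}$ such that for all $k\in\mathbb{N}_0$, $$\mathbf{E}\{V_{k+1}\mid Z(k)=(P,i)\}\le W+\nu_i\big(\|A(k)\|^2\operatorname{tr}P+\operatorname{tr}Q(k)\big),$$ where $\nu_i=\sum_{j\in\mathbb{B}}p_{ij}\Pr\{r(k)=0\mid\Xi(k)=j\}$.
   Context: System: $x(k+1)=A(k)x(k)+w(k)$, $k\in\mathbb{N}_0$, $x(k)\in\mathbb{R}^n$, $x(0)\sim\mathcal N(x_0,P_0)$, $w(k)\sim\mathcal N(0,Q(k))$ independent. Sensors $S_1,\dots,S_M$: $y_m(k)=C_mx(k)+v_m(k)$, $v_m(k)\sim\mathcal N(0,R_m(k))$ independent; $x(0),w,v_m$ mutually independent; $\{A(k)\},\{Q(k)\},\{R_m(k)\}$ deterministic and bounded. $\|\cdot\|$ is the spectral norm. Network: directed tree with root (gateway) $S_0$; each $S_m$ has one outgoing edge $\mathcal E_m=(S_m,\mathrm{parent}(S_m))$ and a unique path to $S_0$ with edge set $\mathrm{edge}(\mathrm{path}(S_m))$. Network state $\Xi(k)\in\mathbb{B}=\{1,\dots,|\mathbb{B}|\}$, defined for $k\ge-1$; channel gains $h_m(k)\ge0$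 with time-homogeneous conditional distributions given the network state and conditionally independent across links and times given the network states. Link successes $\gamma_m(k)\in\{0,1\}$ with $\Pr\{\gamma_m(k)=1\mid h_m(k)=h,u_m(k)=u,b_m(k)=b\}=f_m(hu,b)$, where (standing assumption) the power and bit-rate laws are $u_m(k)=\kappa_m(\Xi(k),h_1(k),\dots,h_M(k))$, $b_m(k)=\eta_m(\Xi(k),h_1(k),\dots,h_M(k))$. Conditioned on the network states, the $\gamma_m(k)$ are independent across $m$ and $k$ with $\Pr\{\gamma_m(k)=1\mid\Xi(k)=j\}$ independent of $k$; network and dropout processes are independent of $x(0),w,v_m$. Estimator: $\theta_m(k)=\prod_{\mathcal E_i\in\mathrm{edge}(\mathrm{path}(S_m))}\gamma_i(k)$, $C(k)=[\theta_1(k)C_1;\dots;\theta_M(k)C_M]$, $y(k)=[\theta_1(k)y_1(k);\dots;\theta_M(k)y_M(k)]$, $R(k)=\mathrm{diag}(R_1(k),\dots,R_M(k))$; Kalman filter $\hat x(k+1|k)=A(k)\hat x(k|k-1)+K(k)(y(k)-C(k)\hat x(k|k-1))$, $P(k+1|k)=A(k)P(k|k-1)A(k)^T+Q(k)-K(k)C(k)P(k|k-1)A(k)^T$, $K(k)=A(k)P(k|k-1)C(k)^T(C(k)P(k|k-1)C(k)^T+R(k))^{-1}$, $P(0|-1)=P_0$, $\hat x(0|-1)=x_0$. $r(k)=1$ if $C(k)$ has full column rank, $0$ otherwise. *)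

(* Defs.v *)
From HB Require Import structures.
From mathcomp Require Import all_boot all_order all_algebra.
From mathcomp Require Import boolp classical_sets reals.
Unset Printing Implicit Defensive.
Import Order.TTheory GRing.Theory Num.Theory.
Local Open Scope ring_scope.
Local Open Scope classical_set_scope.

Section KalmanDefs.
Context {R : realType}.

Definition enorm {n : nat} (x : 'cV[R]_n) : R := Num.sqrt (\sum_i x i 0 ^+ 2).

Definition specnorm {m n : nat} (A : 'M[R]_(m, n)) : R :=
  sup [set enorm (A *m x) | x in [set x : 'cV[R]_n | enorm x = 1]].

Definition psd {n : nat} (P : 'M[R]_n) : Prop :=
  P^T = P /\ forall x : 'cV[R]_n, 0 <= (x^T *m P *m x) 0 0.
Definition pd {n : nat} (P : 'M[R]_n) : Prop :=
  P^T = P /\ forall x : 'cV[R]_n, x != 0 -> 0 < (x^T *m P *m x) 0 0.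

(* Directed tree rooted at the gateway S_0: [par m = None] means that the
   outgoing edge E_m of S_m goes to S_0, [par m = Some i] that it goes to S_i. *)
Definition tree_step {M : nat} (par : 'I_M -> option 'I_M) (o : option 'I_M) :=
  obind par o.
(* every path reaches the gateway (so the graph is a tree rooted at S_0) *)
Definition rooted_tree {M : nat} (par : 'I_M -> option 'I_M) : Prop :=
  forall m : 'I_M, iter M (tree_step par) (Some m) = None.
(* the sensors i whose outgoing edge E_i lies on path(S_m) *)
Definition path_edges {M : nat} (par : 'I_M -> option 'I_M) (m : 'I_M) : {set 'I_M} :=
  [set i | [exists t : 'I_M.+1, iter t (tree_step par) (Some m) == Some i]].

Definition theta {M : nat} (par : 'I_M -> option 'I_M) (g : {ffun 'I_M -> bool})
  (m : 'I_M) : bool := [forall i in path_edges par m, g i].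

Definition Cstack {M n : nat} (p : 'I_M -> nat) (par : 'I_M -> option 'I_M)
  (C : forall m : 'I_M, 'M[R]_(p m, n)) (g : {ffun 'I_M -> bool})
  : 'M[R]_(\sum_m p m, n) :=
  \mxcol_m ((theta par g m)%:R *: C m).
Definition Rstack {M : nat} (p : 'I_M -> nat)
  (Rm : forall m : 'I_M, nat -> 'M[R]_(p m)) (k : nat) : 'M[R]_(\sum_m p m) :=
  \mxdiag_m Rm m k.

Definition rfull {N n : nat} (C : 'M[R]_(N, n)) : bool := \rank C == n.

Definition riccati {n N : nat} (A Q : 'M[R]_n) (C : 'M[R]_(N, n)) (Rk : 'M[R]_N)
  (P : 'M[R]_n) : 'M[R]_n :=
  let K := A *m P *m C^T *m invmx (C *m P *m C^T + Rk) in
  A *m P *m A^T + Q - K *m C *m P *m A^T.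

(* P(k|k-1) along a realization gs of the link-success vectors gamma(0), gamma(1), ... *)
Fixpoint Ppred {M n : nat} (p : 'I_M -> nat) (par : 'I_M -> option 'I_M)
  (A Q : nat -> 'M[R]_n) (C : forall m : 'I_M, 'M[R]_(p m, n))
  (Rm : forall m : 'I_M, nat -> 'M[R]_(p m)) (P0 : 'M[R]_n)
  (gs : nat -> {ffun 'I_M -> bool}) (k : nat) : 'M[R]_n :=
  match k with
  | 0 => P0
  | k'.+1 => riccati (A k') (Q k') (Cstack p par C (gs k')) (Rstack p Rm k')
               (@Ppred M n p par A Q C Rm P0 gs k')
  end.

(* conditional law of gamma(k) given Xi(k) = j:
   independent Bernoulli(q m j) across links *)
Definition gprob {M B : nat} (q : 'I_M -> 'I_B -> R) (j : 'I_B)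
  (g : {ffun 'I_M -> bool}) : R :=
  \prod_m (if g m then q m j else 1 - q m j).

Definition prob_r0 {M B n : nat} (p : 'I_M -> nat) (par : 'I_M -> option 'I_M)
  (C : forall m : 'I_M, 'M[R]_(p m, n)) (q : 'I_M -> 'I_B -> R) (j : 'I_B) : R :=
  \sum_(g : {ffun 'I_M -> bool} | ~~ rfull (Cstack p par C g)) gprob q j g.

Definition nu {M B n : nat} (p : 'I_M -> nat) (par : 'I_M -> option 'I_M)
  (C : forall m : 'I_M, 'M[R]_(p m, n)) (q : 'I_M -> 'I_B -> R)
  (pt : 'I_B -> 'I_B -> R) (i : 'I_B) : R :=
  \sum_j pt i j * prob_r0 p par C q j.

(* Finite sample space for the horizon k: the network states
   Xi(-1), ..., Xi(k) (index t of the first component is Xi(t-1))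
   and the link successes gamma(0), ..., gamma(k). *)
Definition Omega (M B k : nat) : finType :=
  ({ffun 'I_k.+2 -> 'I_B} * {ffun 'I_k.+1 -> {ffun 'I_M -> bool}})%type.

Definition XiS {M B k : nat} (w : Omega M B k) (t : nat) : 'I_B := w.1 (inord t).
Definition gamS {M B k : nat} (w : Omega M B k) (t : nat) : {ffun 'I_M -> bool} :=
  w.2 (inord t).

(* joint probability of an outcome: Markov chain with initial law pi0 for
   Xi(-1) and transition probabilities pt; gamma(t) conditionally independent
   given the network states, with law gprob q Xi(t). *)
Definition weight {M B k : nat} (pi0 : 'I_B -> R) (pt : 'I_B -> 'I_B -> R)
  (q : 'I_M -> 'I_B -> R) (w : Omega M B k) : R :=
  pi0 (XiS w 0) * \prod_(t < k.+1) pt (XiS w t) (XiS w t.+1)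
  * \prod_(t < k.+1) gprob q (XiS w t.+1) (gamS w t).

End KalmanDefs.

(* Main.v *)
Require Import Defs.
From HB Require Import structures.
From mathcomp Require Import all_boot all_order all_algebra.
From mathcomp Require Import boolp classical_sets reals.
From mathcomp Require Import ring lra zify.
Import Order.TTheory GRing.Theory Num.Theory.
Local Open Scope ring_scope.


Section A.
Context {R : realType}.

Definition bil {n} (P : 'M[R]_n) (x y : 'cV[R]_n) : R := (x^T *m P *m y) 0 0.

Lemma bilE n (P : 'M[R]_n) x y :
  bil P x y = \sum_i \sum_j x i 0 * P i j * y j 0.
Proof.
rewrite /bil mxE; under eq_bigr do rewrite mxE big_distrl /=.
rewrite exchange_big; apply: eq_bigr => i _; apply: eq_bigr => j _.
by rewrite !mxE.
Qed.

Lemma bil_delta n (P : 'M[R]_n) a b :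
  bil P (delta_mx a 0) (delta_mx b 0) = P a b.
Proof.
rewrite bilE (bigD1 a) //= [X in _ + X]big1 ?addr0 => [|i ia]; last first.
  by rewrite big1 // => j _; rewrite [delta_mx a 0 i 0]mxE (negbTE ia) !mul0r.
rewrite (bigD1 b) //= [X in _ + X]big1 ?addr0 => [|j jb]; last first.
  by rewrite [delta_mx b 0 j 0]mxE (negbTE jb) mulr0.
by rewrite !mxE !eqxx mulr1 mul1r.
Qed.

Lemma bilDl n (P : 'M[R]_n) x y z : bil P (x + y) z = bil P x z + bil P y z.
Proof. by rewrite /bil linearD /= !mulmxDl mxE. Qed.
Lemma bilDr n (P : 'M[R]_n) x y z : bil P z (x + y) = bil P z x + bil P z y.
Proof. by rewrite /bil !mulmxDr mxE. Qed.
Lemma bilZl n (P : 'M[R]_n) a x y : bil P (a *: x) y = a * bil P x y.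
Proof. by rewrite /bil linearZ /= -!scalemxAl mxE. Qed.
Lemma bilZr n (P : 'M[R]_n) a x y : bil P x (a *: y) = a * bil P x y.
Proof. by rewrite /bil -!scalemxAr mxE. Qed.
Lemma bil_sym n (P : 'M[R]_n) x y : P^T = P -> bil P x y = bil P y x.
Proof.
move=> sP; rewrite /bil -[in LHS](trmxK (x^T *m P *m y)) mxE.
by rewrite !trmx_mul trmxK sP mulmxA.
Qed.

Lemma tr11 (M : 'M[R]_1) : M^T = M.
Proof. by apply/matrixP => i j; rewrite !ord1 mxE. Qed.

Lemma psd_diag n (P : 'M[R]_n) i : psd P -> 0 <= P i i.
Proof. by case=> _ /(_ (delta_mx i 0)); rewrite -/(bil _ _ _) bil_delta. Qed.

Lemma psd_tr n (P : 'M[R]_n) : psd P -> 0 <= \tr P.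
Proof. by move=> hP; rewrite /mxtrace sumr_ge0 // => i _; apply: psd_diag. Qed.

Lemma psd_congr n m (S : 'M[R]_n) (M : 'M[R]_(m, n)) :
  psd S -> psd (M *m S *m M^T).
Proof.
case=> sS qS; split; first by rewrite !trmx_mul trmxK sS mulmxA.
move=> x; have := qS (M^T *m x).
by rewrite trmx_mul trmxK !mulmxA.
Qed.

Lemma psdD n (P Q : 'M[R]_n) : psd P -> psd Q -> psd (P + Q).
Proof.
case=> sP qP [sQ qQ]; split; first by rewrite linearD /= sP sQ.
by move=> x; rewrite mulmxDr mulmxDl mxE addr_ge0.
Qed.

Lemma pd_psd n (P : 'M[R]_n) : pd P -> psd P.
Proof.
case=> sP qP; split => // x; have [->|x0] := eqVneq x 0.
  by rewrite mulmx0 mxE.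
exact/ltW/qP.
Qed.

Lemma pd_unit n (S : 'M[R]_n) : pd S -> S \in unitmx.
Proof.
case=> sS qS; rewrite -row_free_unit; apply: contraT => nf.
have : kermx S != 0.
  by rewrite -mxrank_eq0 mxrank_ker subn_eq0 -ltnNge ltn_neqAle nf rank_leq_row.
case/matrix0Pn => i [j hij].
have hv : (row i (kermx S))^T != 0.
  by rewrite trmx_eq0; apply/rV0Pn; exists j; rewrite (@mxE _ 1 n).
have := qS _ hv; rewrite trmxK -row_mul mulmx_ker.
by rewrite linear0 mul0mx mxE ltxx.
Qed.


Lemma bilPD n (P Q : 'M[R]_n) x y : bil (P + Q) x y = bil P x y + bil Q x y.
Proof. by rewrite /bil mulmxDr mulmxDl mxE. Qed.
Lemma bilPN n (P : 'M[R]_n) x y : bil (- P) x y = - bil P x y.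
Proof. by rewrite /bil mulmxN mulNmx mxE. Qed.
Lemma bilPZ n (P : 'M[R]_n) a x y : bil (a *: P) x y = a * bil P x y.
Proof. by rewrite /bil -scalemxAr -scalemxAl mxE. Qed.

Lemma row_zero_psd n (P : 'M[R]_n) r j : psd P -> P r r = 0 -> P r j = 0.
Proof.
case=> sP qP arr; apply/eqP; apply: contraT => hb.
set b := P r j; set d := P j j.
have hd : 0 <= d by apply: (@psd_diag _ P); split.
have hjr : P j r = b by rewrite /b -[in LHS]sP mxE.
set s := - (d + 1) / (2 * b).
have hs : s * b = - (d + 1) / 2 by rewrite /s; field; rewrite hb.
have := qP (s *: delta_mx r 0 + delta_mx j 0); rewrite -/(bil _ _ _).
rewrite !(bilDl, bilDr, bilZl, bilZr) !bil_delta arr hjr.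
rewrite -/b -/d mulr0 mulr0 add0r; lra.
Qed.

Lemma dec_aux n k : (k <= n)%N -> forall P : 'M[R]_n, psd P ->
  (forall i j : 'I_n, (i < n - k)%N -> P i j = 0) ->
  exists m (G : 'M[R]_(n, m)), P = G *m G^T.
Proof.
elim: k => [|k IH] hk P hP hz.
  exists 0%N, 0; apply/matrixP => i j; rewrite mul0mx mxE hz //.
  by rewrite subn0 ltn_ord.
have hr : (n - k.+1 < n)%N by lia.
set r := Ordinal hr.
have [a0|an0] := eqVneq (P r r) 0.
  apply: IH => //; first by lia.
  move=> i j hi; have [hi'|hi'] := ltnP i (n - k.+1); first exact: hz.
  have -> : i = r by apply: val_inj => /=; lia.
  exact: row_zero_psd.
have apos : 0 < P r r by rewrite lt0r an0 (@psd_diag _ P r hP).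
set a := P r r in an0 apos.
set v := col r P.
set P' := P - a^-1 *: (v *m v^T).
case: hP => sP qP.
have hv : v^T = row r P by rewrite /v tr_col sP.
have hP' : psd P'.
  split.
    by rewrite /P' linearB /= linearZ /= trmx_mul trmxK sP.
  move=> x; rewrite -/(bil _ _ _) /P' bilPD bilPN bilPZ.
  set e := delta_mx r 0 : 'cV[R]_n.
  have hV : bil (v *m v^T) x x = bil P e x * bil P e x.
    rewrite /bil mulmxA -[x^T *m v *m v^T *m x]mulmxA mxE big_ord1.
    have e1 : x^T *m v = e^T *m P *m x.
      by rewrite /v colE -[LHS]tr11 !trmx_mul trmxK sP.
    have e2 : v^T *m x = e^T *m P *m x.
      by rewrite /v colE trmx_mul sP -/e.
    by rewrite e1 e2.
  rewrite hV; set q := bil P x x; set be := bil P e x.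
  set t := - be / a.
  have hta : t * a = - be by rewrite /t; field; rewrite an0.
  have := qP (x + t *: e); rewrite -/(bil _ _ _).
  rewrite !(bilDl, bilDr, bilZl, bilZr) -/q -/be (@bil_sym _ P x e sP) -/be.
  rewrite /e bil_delta -/a.
  have -> : a^-1 * (be * be) = - (t * be).
    by rewrite /t; field; rewrite an0.
  nra.
have [m [G' hG']] : exists m (G : 'M[R]_(n, m)), P' = G *m G^T.
  apply: IH hP' _ => [|i j hi]; first by lia.
  rewrite /P' !mxE big_ord1 !mxE.
  have [hi'|hi'] := ltnP i (n - k.+1).
    by rewrite (hz i j hi') (hz i r hi') mul0r mulr0 subr0.
  have -> : i = r by apply: val_inj => /=; lia.
  have hjr : P j r = P r j by rewrite -[in LHS]sP mxE.
  by rewrite -/a mulrA mulVf // mul1r hjr subrr.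
exists (m + 1)%N, (row_mx G' ((Num.sqrt a)^-1 *: v)).
rewrite tr_row_mx mul_row_col -hG' /P' linearZ /=.
rewrite linearZ /= -scalemxAl -scalemxAr scalerA -invfM -expr2 sqr_sqrtr ?ltW //.
by rewrite scalerN addrNK.
Qed.

Lemma psd_dec n (P : 'M[R]_n) : psd P -> exists m (G : 'M[R]_(n, m)), P = G *m G^T.
Proof. by move=> hP; apply: (@dec_aux n n) => // i j; rewrite subnn. Qed.

End A.


Section B.
Context {R : realType}.
Local Open Scope classical_set_scope.

Definition nsq {n} (x : 'cV[R]_n) : R := \sum_i x i 0 ^+ 2.

Lemma nsq_ge0 {n} (x : 'cV[R]_n) : 0 <= nsq x.
Proof. by apply: sumr_ge0 => i _; apply: sqr_ge0. Qed.

Lemma nsqZ {n} (x : 'cV[R]_n) c : nsq (c *: x) = c ^+ 2 * nsq x.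
Proof. by rewrite /nsq mulr_sumr; apply: eq_bigr => i _; rewrite mxE exprMn. Qed.

Lemma nsq_term {n} (x : 'cV[R]_n) i : x i 0 ^+ 2 <= nsq x.
Proof.
rewrite /nsq (bigD1 i) //= lerDl; apply: sumr_ge0 => j _; exact: sqr_ge0.
Qed.

Lemma nsq0 {n} (x : 'cV[R]_n) : nsq x = 0 -> x = 0.
Proof.
move=> h; apply/matrixP => i j; rewrite ord1 mxE.
have := nsq_term x i; rewrite h => hle.
have : x i 0 ^+ 2 = 0 by apply/eqP; rewrite eq_le hle sqr_ge0.
by move/eqP; rewrite sqrf_eq0 => /eqP.
Qed.

Lemma enorm_nsq {n} (x : 'cV[R]_n) : enorm x = Num.sqrt (nsq x).
Proof. by []. Qed.

Lemma sn_has_sup {m n} (A : 'M[R]_(m, n)) (u : 'cV[R]_n) : enorm u = 1 ->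
  has_sup [set enorm (A *m x) | x in [set x : 'cV[R]_n | enorm x = 1]].
Proof.
move=> hu; split; first by exists (enorm (A *m u)), u.
exists (Num.sqrt (\sum_i (\sum_j `|A i j|) ^+ 2)) => _ [y hy <-].
have ny : nsq y = 1.
  by rewrite -[nsq y]sqr_sqrtr ?nsq_ge0 // -enorm_nsq hy expr1n.
rewrite enorm_nsq ler_sqrt; last by apply: sumr_ge0 => i _; apply: sqr_ge0.
apply: ler_sum => i _; rewrite mxE.
have hyj : forall j, `|y j 0| <= 1.
  move=> j; have := nsq_term y j; rewrite ny -real_normK ?num_real // => h.
  have := normr_ge0 (y j 0); nra.
rewrite -real_normK ?num_real // ler_pXn2r ?nnegrE //; last first.
  by apply: sumr_ge0 => j _.
apply: le_trans (ler_norm_sum _ _ _) _; apply: ler_sum => j _.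
rewrite normrM; apply: ler_piMr => //.
Qed.

Lemma sn_bound {m n} (A : 'M[R]_(m, n)) x :
  nsq (A *m x) <= specnorm A ^+ 2 * nsq x /\ (0 < nsq x -> 0 <= specnorm A).
Proof.
have [a0|apos] := eqVneq (nsq x) 0.
  rewrite a0 ltxx; split => //.
  by rewrite (nsq0 x a0) mulmx0 mulr0 /nsq big1 // => i _; rewrite mxE expr0n.
have apos' : 0 < nsq x by rewrite lt0r apos nsq_ge0.
set a := nsq x in apos apos'.
set c := (Num.sqrt a)^-1.
have hc2 : c ^+ 2 = a^-1 by rewrite /c exprVn sqr_sqrtr // ltW.
have hu : enorm (c *: x) = 1 by rewrite enorm_nsq nsqZ hc2 mulVf // sqrtr1.
have hle : enorm (A *m (c *: x)) <= specnorm A.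
  by apply: (sup_upper_bound (sn_has_sup A _ hu)); exists (c *: x).
have he : enorm (A *m (c *: x)) = Num.sqrt (a^-1 * nsq (A *m x)).
  by rewrite -scalemxAr enorm_nsq nsqZ hc2.
rewrite he in hle.

have s0 : 0 <= specnorm A by apply: le_trans hle; apply: sqrtr_ge0.
split; last by [].
have : a^-1 * nsq (A *m x) <= specnorm A ^+ 2.
  rewrite -[X in X <= _]sqr_sqrtr; last by rewrite mulr_ge0 ?nsq_ge0 ?invr_ge0 ?ltW.
  by rewrite ler_pXn2r ?nnegrE ?sqrtr_ge0.
by rewrite ler_pdivrMl // mulrC.
Qed.

End B.


Section C.
Context {R : realType}.

Lemma trLL {n m} (L : 'M[R]_(n, m)) : \tr (L *m L^T) = \sum_i nsq (row i L)^T.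
Proof.
rewrite /mxtrace; apply: eq_bigr => i _; rewrite mxE /nsq.
by apply: eq_bigr => j _; rewrite !mxE expr2.
Qed.

Lemma trLL_col {n m} (L : 'M[R]_(n, m)) : \tr (L *m L^T) = \sum_j nsq (col j L).
Proof.
rewrite trLL /nsq exchange_big; apply: eq_bigr => j _; apply: eq_bigr => i _.
by rewrite !mxE.
Qed.

Lemma col_mul {n m p} (A : 'M[R]_(n, m)) (G : 'M[R]_(m, p)) j :
  col j (A *m G) = A *m col j G.
Proof. by rewrite !colE mulmxA. Qed.

Lemma tr_AG {n m p} (A : 'M[R]_(n, m)) (G : 'M[R]_(m, p)) :
  \tr ((A *m G) *m (A *m G)^T) <= specnorm A ^+ 2 * \tr (G *m G^T).
Proof.
rewrite !trLL_col mulr_sumr; apply: ler_sum => j _.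
by rewrite col_mul; case: (sn_bound A (col j G)).
Qed.

Lemma tr_APA {n m} (A : 'M[R]_(n, m)) (P : 'M[R]_m) : psd P ->
  \tr (A *m P *m A^T) <= specnorm A ^+ 2 * \tr P.
Proof.
move=> /psd_dec [k [G ->]].
by rewrite !mulmxA -mulmxA -trmx_mul; apply: tr_AG.
Qed.

Definition dot {n} (u v : 'cV[R]_n) := \sum_i u i 0 * v i 0.

Lemma bil_dot {n} (B : 'M[R]_n) x : bil B x x = dot x (B *m x).
Proof.
by rewrite /bil -mulmxA mxE /dot; apply: eq_bigr => i _; rewrite mxE.
Qed.

Lemma dot_le {n} (x y : 'cV[R]_n) t :
  2 * t * dot x y <= t ^+ 2 * nsq x + nsq y.
Proof.
rewrite /dot /nsq !mulr_sumr -big_split /=; apply: ler_sum => i _.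
have := sqr_ge0 (t * x i 0 - y i 0); nra.
Qed.

Lemma quad_bound {n} (B : 'M[R]_n) c x : specnorm B <= c ->
  bil B x x <= (`|c| + 1) * nsq x.
Proof.
move=> hc; rewrite bil_dot.
have [a0|apos] := eqVneq (nsq x) 0.
  by rewrite a0 (nsq0 x a0) mulr0 mulmx0 /dot big1 // => i _; rewrite mxE mulr0.
have apos' : 0 < nsq x by rewrite lt0r apos nsq_ge0.
have [hb hs] := sn_bound B x; have s0 := hs apos'.
have := dot_le x (B *m x) (`|c| + 1).
have := normr_ge0 c; have := ler_norm c.
set s := specnorm B in hb hs s0 hc *; set a := nsq x in apos apos' hb *.
set d := nsq (B *m x) in hb *; set b := dot x (B *m x); set cc := `|c|.
move=> h1 h2 h3.
have hs2 : s ^+ 2 <= (cc + 1) ^+ 2 by rewrite ler_pXn2r ?nnegrE //; lra.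
have : d <= (cc + 1) ^+ 2 * a.
  by apply: le_trans hb _; rewrite ler_pM2r.
nra.
Qed.

Lemma tr_LDL {N n} (D : 'M[R]_N) (L : 'M[R]_(n, N)) k :
  (forall x, bil D x x <= k * nsq x) ->
  \tr (L *m D *m L^T) <= k * \tr (L *m L^T).
Proof.
move=> hD; rewrite trLL mulr_sumr /mxtrace; apply: ler_sum => i _.
apply: le_trans (hD (row i L)^T); rewrite /bil trmxK le_eqVlt; apply/orP; left.
apply/eqP; rewrite !mxE; apply: eq_bigr => j _; rewrite !mxE; congr (_ * _).
by apply: eq_bigr => l _; rewrite !mxE.
Qed.

End C.


Section D.
Context {R : realType}.

Lemma block_quad {M} (p : 'I_M -> nat) (B_ : forall m, 'M[R]_(p m))
  (x : 'cV[R]_(\sum_m p m)) :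
  bil (\mxdiag_m B_ m) x x = \sum_m bil (B_ m) (submxcol x m) (submxcol x m).
Proof.
rewrite /bil; set xs := fun i => submxcol x i.
transitivity (((\mxcol_i xs i)^T *m \mxdiag_m B_ m *m \mxcol_i xs i) 0 0).
  by rewrite /xs submxcolK.
rewrite tr_mxcol /mxdiag mul_mxrow_mxblock mul_mxrow_mxcol summxE.
apply: eq_bigr => j _; congr (_ 0 0); congr (_ *m _).
rewrite (bigD1 j) //= eqxx conform_mx_id big1 ?addr0 // => i /negbTE ->.
by rewrite mulmx0.
Qed.

Lemma block_nsq {M} (p : 'I_M -> nat) (x : 'cV[R]_(\sum_m p m)) :
  nsq x = \sum_m nsq (submxcol x m).
Proof.
have e : forall n (y : 'cV[R]_n), nsq y = (y^T *m y) 0 0.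
  by move=> n y; rewrite mxE /nsq; apply: eq_bigr => i _; rewrite mxE expr2.
rewrite e; transitivity (((\mxcol_i submxcol x i)^T *m \mxcol_i submxcol x i) 0 0).
  by rewrite submxcolK.
by rewrite tr_mxcol mul_mxrow_mxcol summxE; apply: eq_bigr => i _; rewrite e.
Qed.

Lemma block_pd {M} (p : 'I_M -> nat) (B_ : forall m, 'M[R]_(p m)) :
  (forall m, pd (B_ m)) -> pd (\mxdiag_m B_ m).
Proof.
move=> hB; split.
  by rewrite tr_mxdiag; apply: eq_mxdiag => m; case: (hB m).
move=> x x0; rewrite -/(bil _ _ _) block_quad.
have [m hm] : exists m, submxcol x m != 0.
  apply/existsP; apply: contraT; rewrite negb_exists => /forallP h.
  move: x0; rewrite -(submxcolK x).
  have -> : \mxcol_i submxcol x i = \mxcol_i (0 : 'M[R]_(p i, 1)).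
    by apply: eq_mxcol => i; apply/eqP; rewrite -[_ == _]negbK h.
  by rewrite mxcol0 eqxx.
rewrite (bigD1 m) //=; apply: ltr_wpDr.
  apply: sumr_ge0 => i _; case: (pd_psd _ _ (hB i)) => _ h; exact: h.
by case: (hB m) => _ h; apply: h.
Qed.

Lemma block_bound {M} (p : 'I_M -> nat) (B_ : forall m, 'M[R]_(p m)) c x :
  (forall m, specnorm (B_ m) <= c) ->
  bil (\mxdiag_m B_ m) x x <= (`|c| + 1) * nsq x.
Proof.
move=> hc; rewrite block_quad block_nsq mulr_sumr; apply: ler_sum => m _.
exact: quad_bound.
Qed.

End D.


Section E.
Context {R : realType}.

Lemma ric_id {n N} (A Q P : 'M[R]_n) (C : 'M[R]_(N, n)) (D : 'M[R]_N)
  (L : 'M[R]_(n, N)) :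
  P^T = P -> D^T = D -> (C *m P *m C^T + D) \in unitmx ->
  riccati A Q C D P +
    (L - A *m P *m C^T *m invmx (C *m P *m C^T + D)) *m (C *m P *m C^T + D)
      *m (L - A *m P *m C^T *m invmx (C *m P *m C^T + D))^T
  = (A - L *m C) *m P *m (A - L *m C)^T + L *m D *m L^T + Q.
Proof.
move=> sP sD.
rewrite /riccati /=.
set S := C *m P *m C^T + D => uS.
set K := A *m P *m C^T *m invmx S.
have sS : S^T = S by rewrite /S linearD /= !trmx_mul trmxK sP sD mulmxA.
have h1 : K *m S = A *m P *m C^T by rewrite /K -mulmxA mulVmx // mulmx1.
have h2 : S *m K^T = C *m P *m A^T.
  by rewrite -sS -trmx_mul h1 !trmx_mul trmxK sP mulmxA.
have h3 : K *m S *m K^T = K *m C *m P *m A^T by rewrite -mulmxA h2 !mulmxA.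
rewrite linearB /= !mulmxBl !mulmxBr h3 h1 -(mulmxA L S K^T) h2.
rewrite /S mulmxDr mulmxDl.

rewrite [(A - L *m C)^T]linearB /= trmx_mul !mulmxBr !mulmxA.
move: (A *m P *m A^T) (K *m C *m P *m A^T) (L *m C *m P *m C^T *m L^T)
  (L *m D *m L^T) (L *m C *m P *m A^T) (A *m P *m C^T *m L^T) Q.
move=> a1 a2 a3 a4 a5 a6 a7.
apply/matrixP => i j; rewrite !mxE; ring.
Qed.
End E.

Section E2.
Context {R : realType}.

Lemma psd_pd_add {n} (X Y : 'M[R]_n) : psd X -> pd Y -> pd (X + Y).
Proof.
case=> sX qX [sY qY]; split; first by rewrite linearD /= sX sY.
by move=> x x0; rewrite mulmxDr mulmxDl mxE; apply: ltr_wpDl; [apply: qX | apply: qY].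
Qed.

Lemma ric_facts {n N} (A Q P : 'M[R]_n) (C : 'M[R]_(N, n)) (D : 'M[R]_N) :
  psd P -> pd D -> psd Q ->
  psd (riccati A Q C D P) /\
  forall L : 'M[R]_(n, N), \tr (riccati A Q C D P) <=
     \tr ((A - L *m C) *m P *m (A - L *m C)^T) + \tr (L *m D *m L^T) + \tr Q.
Proof.
move=> hP hD hQ.
have hS : pd (C *m P *m C^T + D) by apply: psd_pd_add => //; apply: psd_congr.
have uS := pd_unit _ _ hS.
have sP : P^T = P by case: hP.
have sD : D^T = D by case: hD.
have hid := fun L => ric_id A Q P C D L sP sD uS.
split.
  have := hid (A *m P *m C^T *m invmx (C *m P *m C^T + D)).
  rewrite subrr mul0mx mul0mx addr0 => ->.
  apply: psdD => //; apply: psdD; first exact: psd_congr.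
  by apply: psd_congr; apply: pd_psd.
move=> L; have := hid L => /(congr1 mxtrace); rewrite !mxtraceD => e.
rewrite -e lerDl; apply: psd_tr; apply: psd_congr; exact: pd_psd.
Qed.

Lemma tr_n0 {n} (M : 'M[R]_n) : n = 0%N -> \tr M = 0.
Proof. by move=> n0; rewrite /mxtrace big1 // => i _; have := ltn_ord i; rewrite {2}n0. Qed.

Lemma trLL_ge0 {n m} (L : 'M[R]_(n, m)) : 0 <= \tr (L *m L^T).
Proof. by rewrite trLL; apply: sumr_ge0 => i _; apply: nsq_ge0. Qed.

Lemma sn_ge0 {m n} (A : 'M[R]_(m, n)) : (0 < n)%N -> 0 <= specnorm A.
Proof.
move=> n0; have [_] := sn_bound A (delta_mx (Ordinal n0) 0); apply.
apply: lt_le_trans (nsq_term _ (Ordinal n0)); rewrite mxE !eqxx /=.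
by rewrite expr1n ltr01.
Qed.

Lemma tr_ALLA {n m N} (A : 'M[R]_(n, m)) (Cp : 'M[R]_(m, N)) c :
  specnorm A <= c ->
  \tr ((A *m Cp) *m (A *m Cp)^T) <= c ^+ 2 * \tr (Cp *m Cp^T).
Proof.
move=> hc; have [m0|mpos] := posnP m.
  rewrite (_ : Cp = 0) ?mulmx0 ?mul0mx ?trmx0 ?mulmx0 ?linear0 ?mxtrace0 ?mulr0 //.
  by apply/matrixP => i j; move: (ltn_ord i); rewrite [X in (_ < X)%N -> _]m0.
apply: le_trans (tr_AG A Cp) _; apply: ler_wpM2r; first exact: trLL_ge0.
have s0 := sn_ge0 A mpos.
by rewrite ler_pXn2r ?nnegrE //; apply: le_trans hc.
Qed.

End E2.


Section F.
Context {R : realType}.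

Lemma sum_upd (U X : finType) (upd : U -> X -> U) (key : U -> X) x0 (F : U -> R) :
  (forall u x, key (upd u x) = x) -> (forall u x y, upd (upd u x) y = upd u y) ->
  (forall u, upd u (key u) = u) ->
  \sum_u F u = \sum_(v | key v == x0) \sum_x F (upd v x).
Proof.
move=> k1 k2 k3.
rewrite pair_big_dep /=.
rewrite [RHS](reindex (fun u => (upd u x0, key u))) /=.
  by apply: eq_big => [u|u _]; rewrite ?k1 ?eqxx // k2 k3.
exists (fun p => upd p.1 p.2) => [u _|[v x]]; first by rewrite k2 k3.
rewrite inE /= andbT => /eqP hv; rewrite k1 k2 -hv k3.
by [].
Qed.

Variables (M B k : nat).
Local Notation Om := (Omega M B k).
Local Notation G := {ffun 'I_M -> bool}.

Definition updw (w : Om) (x : 'I_B * G) : Om :=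
  ([ffun t => if t == ord_max then x.1 else w.1 t],
   [ffun t => if t == ord_max then x.2 else w.2 t]).
Definition keyw (w : Om) : 'I_B * G := (w.1 ord_max, w.2 ord_max).

Lemma keyw_upd w x : keyw (updw w x) = x.
Proof. by case: x => a b; rewrite /keyw /updw /= !ffunE !eqxx. Qed.
Lemma updw_upd w x y : updw (updw w x) y = updw w y.
Proof.
rewrite /updw /=; congr (_, _); apply/ffunP => t; rewrite !ffunE;
  by case: eqP.
Qed.
Lemma updw_key w : updw w (keyw w) = w.
Proof.
case: w => a b; rewrite /updw /keyw /=; congr (_, _); apply/ffunP => t;
  rewrite !ffunE; by case: eqP => // ->.
Qed.

Lemma XiS_upd w x t : (t <= k)%N -> XiS (updw w x) t = XiS w t.
Proof.
move=> tk; rewrite /XiS /updw /= ffunE; case: eqP => // /(congr1 val).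
rewrite /= inordK; [move=> e; exfalso; lia | lia].
Qed.
Lemma XiS_upd_last w x : XiS (updw w x) k.+1 = x.1.
Proof.
rewrite /XiS /updw /= ffunE; case: eqP => // /eqP; rewrite -val_eqE /=.
by rewrite inordK // eqxx.
Qed.
Lemma gamS_upd w x t : (t < k)%N -> gamS (updw w x) t = gamS w t.
Proof.
move=> tk; rewrite /gamS /updw /= ffunE; case: eqP => // /(congr1 val).
rewrite /= inordK; [move=> e; exfalso; lia | lia].
Qed.
Lemma gamS_upd_last w x : gamS (updw w x) k = x.2.
Proof.
rewrite /gamS /updw /= ffunE; case: eqP => // /eqP; rewrite -val_eqE /=.
by rewrite inordK // eqxx.
Qed.

Definition alpha (pi0 : 'I_B -> R) (pt : 'I_B -> 'I_B -> R) (q : 'I_M -> 'I_B -> R)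
  (w : Om) : R :=
  pi0 (XiS w 0) * \prod_(t < k) pt (XiS w t) (XiS w t.+1)
  * \prod_(t < k) gprob q (XiS w t.+1) (gamS w t).

Lemma weight_upd pi0 pt q w x :
  weight pi0 pt q (updw w x) = alpha pi0 pt q w * pt (XiS w k) x.1 * gprob q x.1 x.2.
Proof.
rewrite /weight /alpha !big_ord_recr /= XiS_upd // XiS_upd // XiS_upd_last.
rewrite gamS_upd_last.
have e1 : \prod_(i < k) pt (XiS (updw w x) (widen_ord (leqnSn k) i))
            (XiS (updw w x) (widen_ord (leqnSn k) i).+1)
          = \prod_(t < k) pt (XiS w t) (XiS w t.+1).
  by apply: eq_bigr => i _; move: (ltn_ord i) => hi; rewrite /= !XiS_upd //; lia.
have e2 : \prod_(i < k) gprob q (XiS (updw w x) (widen_ord (leqnSn k) i).+1)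
            (gamS (updw w x) (widen_ord (leqnSn k) i))
          = \prod_(t < k) gprob q (XiS w t.+1) (gamS w t).
  by apply: eq_bigr => i _; move: (ltn_ord i) => hi; rewrite /= XiS_upd ?gamS_upd //; lia.
rewrite e1 e2; ring.
Qed.

Lemma key_sum pi0 pt q (ev : pred Om) i (h : 'I_B -> G -> R) x0 :
  (forall w x, ev (updw w x) = ev w) -> (forall w, ev w -> XiS w k = i) ->
  \sum_(w | ev w) weight pi0 pt q w * h (XiS w k.+1) (gamS w k)
  = (\sum_(v | keyw v == x0) (if ev v then alpha pi0 pt q v else 0))
    * \sum_j pt i j * \sum_g gprob q j g * h j g.
Proof.
move=> hev hi.
rewrite big_mkcond (@sum_upd _ _ updw keyw x0 _ keyw_upd updw_upd updw_key).
rewrite mulr_suml; apply: eq_bigr => v _.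
under eq_bigr do rewrite hev.
case: (boolP (ev v)) => hv; last by rewrite big1 ?mul0r.
rewrite (eq_bigr (fun x => alpha pi0 pt q v * (pt i x.1 * (gprob q x.1 x.2 * h x.1 x.2)))).
  rewrite -mulr_sumr; congr (_ * _).
  rewrite -(pair_bigA _ (fun j g => pt i j * (gprob q j g * h j g))) /=.
  by apply: eq_bigr => j _; rewrite mulr_sumr.
move=> x _; rewrite weight_upd XiS_upd_last gamS_upd_last (hi v hv); ring.
Qed.

End F.


Section G.
Context {R : realType}.

Lemma gprob_ge0 {M B} (q : 'I_M -> 'I_B -> R) j g :
  (forall m j, 0 <= q m j <= 1) -> 0 <= gprob q j g.
Proof.
move=> hq; apply: prodr_ge0 => m _; have /andP[h1 h2] := hq m j.
by case: (g m) => //; rewrite subr_ge0.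
Qed.

Lemma gprob_sum {M B} (q : 'I_M -> 'I_B -> R) j : \sum_g gprob q j g = 1.
Proof.
rewrite /gprob -(bigA_distr_bigA (fun m (b : bool) => if b then q m j else 1 - q m j)).
by rewrite big1 // => m _; rewrite big_bool /= addrC subrK.
Qed.

Lemma weight_ge0 {M B k} (pi0 : 'I_B -> R) pt (q : 'I_M -> 'I_B -> R) (w : Omega M B k) :
  (forall i j, 0 <= pt i j) -> (forall i, 0 <= pi0 i) -> (forall m j, 0 <= q m j <= 1) ->
  0 <= weight pi0 pt q w.
Proof.
move=> h1 h2 h3; rewrite /weight !mulr_ge0 //; apply: prodr_ge0 => t _ //.
exact: gprob_ge0.
Qed.

Lemma Ppred_ext {M n} p par (A Q : nat -> 'M[R]_n) C Rm P0
  (gs gs' : nat -> {ffun 'I_M -> bool}) k :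
  (forall t, (t < k)%N -> gs t = gs' t) ->
  Ppred p par A Q C Rm P0 gs k = Ppred p par A Q C Rm P0 gs' k.
Proof.
elim: k => [|k IH] h //=; rewrite h // IH // => t ht; apply: h; lia.
Qed.

End G.


Theorem lemma2 (R : realType) (n M B : nat)
  (A Q : nat -> 'M[R]_n) (P0 : 'M[R]_n)
  (p : 'I_M -> nat) (C : forall m : 'I_M, 'M[R]_(p m, n))
  (Rm : forall m : 'I_M, nat -> 'M[R]_(p m))
  (par : 'I_M -> option 'I_M)
  (pt : 'I_B -> 'I_B -> R) (pi0 : 'I_B -> R) (q : 'I_M -> 'I_B -> R) :
  rooted_tree par ->
  (forall i j, 0 <= pt i j) -> (forall i, \sum_j pt i j = 1) ->
  (forall i, 0 <= pi0 i) -> \sum_i pi0 i = 1 ->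
  (forall m j, 0 <= q m j <= 1) ->
  psd P0 -> (forall k, psd (Q k)) -> (forall m k, pd (Rm m k)) ->
  (exists c : R, forall k, specnorm (A k) <= c /\ specnorm (Q k) <= c /\
                   forall m, specnorm (Rm m k) <= c) ->
  (forall (gs : nat -> {ffun 'I_M -> bool}) (k : nat),
      0 <= \tr (Ppred p par A Q C Rm P0 gs k)) /\
  exists W : R, 0 <= W /\
    forall (k : nat) (P : 'M[R]_n) (i : 'I_B),
      let ev (w : Omega M B k) :=
        (Ppred p par A Q C Rm P0 (gamS w) k == P) && (XiS w k == i) in
      let prZ := \sum_(w : Omega M B k | ev w) weight pi0 pt q w in
      0 < prZ ->
      (\sum_(w : Omega M B k | ev w)
          weight pi0 pt q w * \tr (Ppred p par A Q C Rm P0 (gamS w) k.+1)) / prZ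
      <= W + nu p par C q pt i * (specnorm (A k) ^+ 2 * \tr P + \tr (Q k)).
Proof.
move=> htree hpt hpt1 hpi0 hpi01 hq hP0 hQ hRm [c hc].
have hR : forall k, pd (Rstack p Rm k).
  by move=> k; rewrite /Rstack; apply: block_pd => m; apply: hRm.
have hPsd : forall gs k, psd (Ppred p par A Q C Rm P0 gs k).
  move=> gs; elim => [|k IH] //=.
  by case: (ric_facts (A k) (Q k) _ (Cstack p par C (gs k)) _ IH (hR k) (hQ k)).
split; first by move=> gs k; apply: psd_tr.
pose Cp := fun g => pinvmx (Cstack p par C g).
pose W := (`|c| + 1) * n%:R + \sum_g (`|c| + 1) * (c ^+ 2 * \tr (Cp g *m (Cp g)^T)).
have hterm : forall g, 0 <= (`|c| + 1) * (c ^+ 2 * \tr (Cp g *m (Cp g)^T)).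
  move=> g; apply: mulr_ge0; first by rewrite addr_ge0.
  by apply: mulr_ge0; [exact: sqr_ge0 | exact: trLL_ge0].
have W0 : 0 <= W.
  apply: addr_ge0; last by apply: sumr_ge0.
  by apply: mulr_ge0; [rewrite addr_ge0 | exact: ler0n].
exists W; split => //.
move=> k P i ev prZ hpr.
set X := specnorm (A k) ^+ 2 * \tr P + \tr (Q k).
have hpw : forall w, ev w -> \tr (Ppred p par A Q C Rm P0 (gamS w) k.+1)
    <= W + (~~ rfull (Cstack p par C (gamS w k)))%:R * X.
  move=> w /andP [/eqP hPk _] /=; rewrite hPk.
  have hPP : psd P by rewrite -hPk.
  set Cs := Cstack p par C (gamS w k).
  have [_ htr] := ric_facts (A k) (Q k) P Cs (Rstack p Rm k) hPP (hR k) (hQ k).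
  have [hA [hQc hRc]] := hc k.
  have trQ : \tr (Q k) <= (`|c| + 1) * n%:R.
    have := tr_LDL (Q k) 1%:M (`|c| + 1) (fun x => quad_bound _ c x hQc).
    by rewrite mul1mx trmx1 mulmx1 mulmx1 mxtrace1.
  case: (boolP (rfull Cs)) => hr /=.
    have h1 : (1%:M <= Cs)%MS by rewrite sub1mx.
    have hCp : Cp (gamS w k) *m Cs = 1%:M by have := mulmxKpV h1; rewrite mul1mx.
    have := htr (A k *m Cp (gamS w k)).
    have -> : A k - A k *m Cp (gamS w k) *m Cs = 0 by rewrite -mulmxA hCp mulmx1 subrr.
    rewrite mul0mx mul0mx mxtrace0 add0r mul0r addr0 => h.
    apply: le_trans h _; rewrite /W addrC lerD //.
    set L := A k *m Cp (gamS w k).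
    have h2 := tr_LDL (Rstack p Rm k) L (`|c| + 1)
                 (fun x => block_bound _ _ c x (hRc)).
    apply: le_trans h2 _.
    apply: le_trans (_ : _ <= (`|c| + 1) * (c ^+ 2 * \tr (Cp (gamS w k) *m (Cp (gamS w k))^T))) _.
      by apply: ler_wpM2l; [rewrite addr_ge0 | apply: tr_ALLA].
    by rewrite (bigD1 (gamS w k)) //= lerDl; apply: sumr_ge0.
  have := htr 0.
  rewrite mul0mx subr0 mul0mx mul0mx mxtrace0 addr0 mul1r => h.
  apply: le_trans h _; apply: le_trans (_ : _ <= X) _; last by rewrite lerDr.
  by rewrite /X; apply: lerD => //; apply: tr_APA.
have hw0 : forall w : Omega M B k, 0 <= weight pi0 pt q w.
  by move=> w; exact: (weight_ge0 pi0 pt q w hpt hpi0 hq).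
pose r := fun w : Omega M B k => (~~ rfull (Cstack p par C (gamS w k)))%:R : R.
have hS : \sum_(w | ev w) weight pi0 pt q w * \tr (Ppred p par A Q C Rm P0 (gamS w) k.+1)
    <= \sum_(w | ev w) weight pi0 pt q w * (W + r w * X).
  by apply: ler_sum => w hw; apply: ler_wpM2l; [exact: hw0 | exact: hpw].
have e1 : \sum_(w | ev w) weight pi0 pt q w * (W + r w * X)
    = W * prZ + X * \sum_(w | ev w) weight pi0 pt q w * r w.
  by rewrite /prZ !mulr_sumr -big_split /=; apply: eq_bigr => w _; ring.
have hev : forall w x, ev (updw M B k w x) = ev w.
  move=> w x; rewrite /ev XiS_upd //.
  rewrite (Ppred_ext p par A Q C Rm P0 _ (gamS w)) // => t ht.
  exact: gamS_upd.
have hi : forall w, ev w -> XiS w k = i by move=> w /andP [_ /eqP].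
pose x0 := (i, [ffun _ : 'I_M => false]).
have eZ : prZ = \sum_(v | keyw M B k v == x0)
                  (if ev v then alpha M B k pi0 pt q v else 0).
  transitivity (\sum_(w | ev w) weight pi0 pt q w *
     (fun (_ : 'I_B) (_ : {ffun 'I_M -> bool}) => (1:R)) (XiS w k.+1) (gamS w k)).
    by rewrite /prZ; apply: eq_bigr => w _; rewrite mulr1.
  rewrite (key_sum M B k pi0 pt q ev i (fun (_ : 'I_B) (_ : {ffun 'I_M -> bool}) => (1:R)) x0 hev hi) /=.
  rewrite (eq_bigr (fun j => pt i j)) ?hpt1 ?mulr1 // => j _.
  by under eq_bigr do rewrite mulr1; rewrite gprob_sum mulr1.
have e0 : \sum_(w | ev w) weight pi0 pt q w * r w = prZ * nu p par C q pt i.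
  rewrite eZ (key_sum M B k pi0 pt q ev i
     (fun _ g => (~~ rfull (Cstack p par C g))%:R) x0 hev hi).
  have hpr0 : forall j, \sum_g gprob q j g * (~~ rfull (Cstack p par C g))%:R
                        = prob_r0 p par C q j.
    move=> j; rewrite /prob_r0 [RHS]big_mkcond; apply: eq_bigr => g _.
    by case: (rfull _); rewrite ?mulr1 ?mulr0.
  congr (_ * _); rewrite /nu.
  by apply: eq_bigr => j _; rewrite hpr0.
rewrite ler_pdivrMr //; apply: le_trans hS _; rewrite e1 e0.
by rewrite le_eqVlt; apply/orP; left; apply/eqP; ring.
Qed.
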